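(* Let $\mathcal B$ be the variety generated by all algebras $(L,t)$ where $L$ is a lattice and $t(x,y,z)=x\wedge(y\vee z)$, and let $\mathcal B^d$ be the variety generated by such algebras with $L$ a distributive lattice. Then neither $\mathcal B$ nor $\mathcal B^d$ is $5$-reversed-modular. Moreover the congruence identities $\alpha(\beta\circ\gamma)\subseteq\alpha(\gamma\circ\beta)\circ\alpha(\gamma\circ\beta)$ and $\alpha(\beta\circ\gamma)\subseteq\gamma\circ\alpha\beta\circ\alpha\gamma\circ\beta$ fail both in $\mathcal B$ and in $\mathcal B^d$. In particular neither $\mathcal B$ nor $\mathcal B^d$ is $4$-alvin.
   Context: Reversed Day terms: $4$-ary $u_0,\dots,u_m$ with $u_k(x,y,y,x)=x$ for all $k$, $u_0(x,y,z,w)=x$, $u_m(x,y,z,w)=w$, $u_k(x,x,w,w)=u_{k+1}(x,x,w,w)$ for odd $k$, $u_k(x,y,y,w)=u_{k+1}(x,y,y,w)$ for even $k$ ($0\le k<m$); $m$-reversed-modular means having such $u_0,\dots,u_m$. Alvin terms: ternary $t_0,\dots,t_n$ with $t_0(x,y,z)=x$, $t_n(x,y,z)=z$, $t_h(x,y,x)=x$ for all $h$, $t_h(x,z,z)=t_{h+1}(x,z,z)$ for even $h$, $t_h(x,x,z)=t_{h+1}(x,x,z)$ for odd $h$; $n$-alvin means having such $t_0,\dots,t_n$. In congruence identities juxtaposition is intersection and $\circ$ composition. *)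

(* Defs.v *)
From HB Require Import structures.
From mathcomp Require Import all_boot all_order.

Set Implicit Arguments.
Unset Strict Implicit.
Unset Printing Implicit Defensive.

Inductive term (V : Type) : Type :=
  | tvar : V -> term V
  | tapp : term V -> term V -> term V -> term V.

Fixpoint eval (V A : Type) (f : A -> A -> A -> A) (e : V -> A) (s : term V) : A :=
  match s with
  | tvar v => e v
  | tapp s1 s2 s3 => f (eval f e s1) (eval f e s2) (eval f e s3)
  end.

Inductive var3 := X3 | Y3 | Z3.
Inductive var4 := X4 | Y4 | Z4 | W4.

Definition env3 (A : Type) (x y z : A) (v : var3) : A :=
  match v with X3 => x | Y3 => y | Z3 => z end.
Definition env4 (A : Type) (x y z w : A) (v : var4) : A :=
  match v with X4 => x | Y4 => y | Z4 => z | W4 => w end.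

Definition ev3 (A : Type) (f : A -> A -> A -> A) (s : term var3) (x y z : A) :=
  eval f (env3 x y z) s.
Definition ev4 (A : Type) (f : A -> A -> A -> A) (s : term var4) (x y z w : A) :=
  eval f (env4 x y z w) s.

Definition alg_class := forall A : Type, (A -> A -> A -> A) -> Prop.

(* (A,f) is a homomorphic image of a subalgebra of a product of algebras
   (L_i, t) with L_i lattices and t(x,y,z) = x /\ (y \/ z). *)
Definition in_B : alg_class := fun A f =>
  exists (I : Type) (d : Order.disp_t) (L : I -> latticeType d)
         (P : (forall i, L i) -> Prop) (h : (forall i, L i) -> A),
    (forall x y z, P x -> P y -> P z ->
       P (fun i => Order.meet (x i) (Order.join (y i) (z i)))) /\
    (forall a : A, exists x, P x /\ h x = a) /\
    (forall x y z, P x -> P y -> P z ->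
       h (fun i => Order.meet (x i) (Order.join (y i) (z i)))
       = f (h x) (h y) (h z)).

Definition in_Bd : alg_class := fun A f =>
  exists (I : Type) (d : Order.disp_t) (L : I -> distrLatticeType d)
         (P : (forall i, L i) -> Prop) (h : (forall i, L i) -> A),
    (forall x y z, P x -> P y -> P z ->
       P (fun i => Order.meet (x i) (Order.join (y i) (z i)))) /\
    (forall a : A, exists x, P x /\ h x = a) /\
    (forall x y z, P x -> P y -> P z ->
       h (fun i => Order.meet (x i) (Order.join (y i) (z i)))
       = f (h x) (h y) (h z)).

Definition reversed_modular (m : nat) (K : alg_class) : Prop :=
  exists u : nat -> term var4,
    forall (A : Type) (f : A -> A -> A -> A), K A f ->
    forall x y z w : A,
      (forall k, k <= m -> ev4 f (u k) x y y x = x) /\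
      ev4 f (u 0) x y z w = x /\
      ev4 f (u m) x y z w = w /\
      (forall k, k < m -> odd k ->
         ev4 f (u k) x x w w = ev4 f (u k.+1) x x w w) /\
      (forall k, k < m -> ~~ odd k ->
         ev4 f (u k) x y y w = ev4 f (u k.+1) x y y w).

Definition alvin (n : nat) (K : alg_class) : Prop :=
  exists t : nat -> term var3,
    forall (A : Type) (f : A -> A -> A -> A), K A f ->
    forall x y z : A,
      ev3 f (t 0) x y z = x /\
      ev3 f (t n) x y z = z /\
      (forall h, h <= n -> ev3 f (t h) x y x = x) /\
      (forall h, h < n -> ~~ odd h ->
         ev3 f (t h) x z z = ev3 f (t h.+1) x z z) /\
      (forall h, h < n -> odd h ->
         ev3 f (t h) x x z = ev3 f (t h.+1) x x z).

Definition congruence (A : Type) (f : A -> A -> A -> A) (R : A -> A -> Prop) :=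
  (forall a, R a a) /\ (forall a b, R a b -> R b a) /\
  (forall a b c, R a b -> R b c -> R a c) /\
  (forall a1 b1 a2 b2 a3 b3, R a1 b1 -> R a2 b2 -> R a3 b3 ->
     R (f a1 a2 a3) (f b1 b2 b3)).

Definition rmeet (A : Type) (R S : A -> A -> Prop) := fun a b => R a b /\ S a b.
Definition rcomp (A : Type) (R S : A -> A -> Prop) :=
  fun a c => exists b, R a b /\ S b c.
Definition rsub (A : Type) (R S : A -> A -> Prop) := forall a b, R a b -> S a b.

Definition CI1 (K : alg_class) : Prop :=
  forall (A : Type) (f : A -> A -> A -> A), K A f ->
  forall al be ga : A -> A -> Prop,
    congruence f al -> congruence f be -> congruence f ga ->
    rsub (rmeet al (rcomp be ga))
         (rcomp (rmeet al (rcomp ga be)) (rmeet al (rcomp ga be))).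

Definition CI2 (K : alg_class) : Prop :=
  forall (A : Type) (f : A -> A -> A -> A), K A f ->
  forall al be ga : A -> A -> Prop,
    congruence f al -> congruence f be -> congruence f ga ->
    rsub (rmeet al (rcomp be ga))
         (rcomp ga (rcomp (rmeet al be) (rcomp (rmeet al ga) be))).

(* Main.v *)
Require Import Defs.
From HB Require Import structures.
From mathcomp Require Import all_boot all_order.

Set Implicit Arguments.
Unset Strict Implicit.
Unset Printing Implicit Defensive.

Definition S3 : seq (seq bool) := [:: [:: false; false; false; false; false; false; false; true];
  [:: false; false; false; false; false; false; true; true];
  [:: false; false; false; false; false; true; false; true];
  [:: false; false; false; false; false; true; true; true];
  [:: false; false; false; false; true; true; true; true];
  [:: false; false; false; true; false; false; false; true];
  [:: false; false; false; true; false; false; true; true];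
  [:: false; false; false; true; false; true; false; true];
  [:: false; false; true; true; false; false; true; true];
  [:: false; true; false; true; false; true; false; true]].
Definition S4 : seq (seq bool) := [:: [:: false; false; false; false; false; false; false; false; false; false; false; false; false; false; false; true];
  [:: false; false; false; false; false; false; false; false; false; false; false; false; false; false; true; true];
  [:: false; false; false; false; false; false; false; false; false; false; false; false; false; true; false; true];
  [:: false; false; false; false; false; false; false; false; false; false; false; false; false; true; true; true];
  [:: false; false; false; false; false; false; false; false; false; false; false; false; true; true; true; true];
  [:: false; false; false; false; false; false; false; false; false; false; false; true; false; false; false; true];
  [:: false; false; false; false; false; false; false; false; false; false; false; true; false; false; true; true];
  [:: false; false; false; false; false; false; false; false; false; false; false; true; false; true; false; true];
  [:: false; false; false; false; false; false; false; false; false; false; false; true; false; true; true; true];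
  [:: false; false; false; false; false; false; false; false; false; false; false; true; true; true; true; true];
  [:: false; false; false; false; false; false; false; false; false; false; true; true; false; false; true; true];
  [:: false; false; false; false; false; false; false; false; false; false; true; true; false; true; true; true];
  [:: false; false; false; false; false; false; false; false; false; false; true; true; true; true; true; true];
  [:: false; false; false; false; false; false; false; false; false; true; false; true; false; true; false; true];
  [:: false; false; false; false; false; false; false; false; false; true; false; true; false; true; true; true];
  [:: false; false; false; false; false; false; false; false; false; true; false; true; true; true; true; true];
  [:: false; false; false; false; false; false; false; false; false; true; true; true; false; true; true; true];
  [:: false; false; false; false; false; false; false; false; false; true; true; true; true; true; true; true];
  [:: false; false; false; false; false; false; false; false; true; true; true; true; true; true; true; true];
  [:: false; false; false; false; false; false; false; true; false; false; false; false; false; false; false; true];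
  [:: false; false; false; false; false; false; false; true; false; false; false; false; false; false; true; true];
  [:: false; false; false; false; false; false; false; true; false; false; false; false; false; true; false; true];
  [:: false; false; false; false; false; false; false; true; false; false; false; false; false; true; true; true];
  [:: false; false; false; false; false; false; false; true; false; false; false; false; true; true; true; true];
  [:: false; false; false; false; false; false; false; true; false; false; false; true; false; false; false; true];
  [:: false; false; false; false; false; false; false; true; false; false; false; true; false; false; true; true];
  [:: false; false; false; false; false; false; false; true; false; false; false; true; false; true; false; true];
  [:: false; false; false; false; false; false; false; true; false; false; true; true; false; false; true; true];
  [:: false; false; false; false; false; false; false; true; false; true; false; true; false; true; false; true];
  [:: false; false; false; false; false; false; true; true; false; false; false; false; false; false; true; true];
  [:: false; false; false; false; false; false; true; true; false; false; false; false; false; true; true; true];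
  [:: false; false; false; false; false; false; true; true; false; false; false; false; true; true; true; true];
  [:: false; false; false; false; false; false; true; true; false; false; false; true; false; false; true; true];
  [:: false; false; false; false; false; false; true; true; false; false; true; true; false; false; true; true];
  [:: false; false; false; false; false; true; false; true; false; false; false; false; false; true; false; true];
  [:: false; false; false; false; false; true; false; true; false; false; false; false; false; true; true; true];
  [:: false; false; false; false; false; true; false; true; false; false; false; false; true; true; true; true];
  [:: false; false; false; false; false; true; false; true; false; false; false; true; false; true; false; true];
  [:: false; false; false; false; false; true; false; true; false; true; false; true; false; true; false; true];
  [:: false; false; false; false; false; true; true; true; false; false; false; false; false; true; true; true];
  [:: false; false; false; false; false; true; true; true; false; false; false; false; true; true; true; true];
  [:: false; false; false; false; true; true; true; true; false; false; false; false; true; true; true; true];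
  [:: false; false; false; true; false; false; false; true; false; false; false; true; false; false; false; true];
  [:: false; false; false; true; false; false; false; true; false; false; false; true; false; false; true; true];
  [:: false; false; false; true; false; false; false; true; false; false; false; true; false; true; false; true];
  [:: false; false; false; true; false; false; false; true; false; false; true; true; false; false; true; true];
  [:: false; false; false; true; false; false; false; true; false; true; false; true; false; true; false; true];
  [:: false; false; false; true; false; false; true; true; false; false; false; true; false; false; true; true];
  [:: false; false; false; true; false; false; true; true; false; false; true; true; false; false; true; true];
  [:: false; false; false; true; false; true; false; true; false; false; false; true; false; true; false; true];
  [:: false; false; false; true; false; true; false; true; false; true; false; true; false; true; false; true];
  [:: false; false; true; true; false; false; true; true; false; false; true; true; false; false; true; true];
  [:: false; true; false; true; false; true; false; true; false; true; false; true; false; true; false; true]].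
Definition alP : seq (nat*nat) := [:: (0,0); (0,1); (0,5); (0,6); (1,0); (1,1); (1,5); (1,6); (2,2); (2,3); (2,4); (2,7); (2,9); (3,2); (3,3); (3,4); (3,7); (3,9); (4,2); (4,3); (4,4); (4,7); (4,9); (5,0); (5,1); (5,5); (5,6); (6,0); (6,1); (6,5); (6,6); (7,2); (7,3); (7,4); (7,7); (7,9); (8,8); (9,2); (9,3); (9,4); (9,7); (9,9)].
Definition beP : seq (nat*nat) := [:: (0,0); (0,2); (0,5); (0,7); (1,1); (1,3); (1,4); (1,6); (1,8); (2,0); (2,2); (2,5); (2,7); (3,1); (3,3); (3,4); (3,6); (3,8); (4,1); (4,3); (4,4); (4,6); (4,8); (5,0); (5,2); (5,5); (5,7); (6,1); (6,3); (6,4); (6,6); (6,8); (7,0); (7,2); (7,5); (7,7); (8,1); (8,3); (8,4); (8,6); (8,8); (9,9)].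
Definition gaP : seq (nat*nat) := [:: (0,0); (0,1); (0,2); (0,3); (1,0); (1,1); (1,2); (1,3); (2,0); (2,1); (2,2); (2,3); (3,0); (3,1); (3,2); (3,3); (4,4); (5,5); (5,6); (5,7); (5,8); (5,9); (6,5); (6,6); (6,7); (6,8); (6,9); (7,5); (7,6); (7,7); (7,8); (7,9); (8,5); (8,6); (8,7); (8,8); (8,9); (9,5); (9,6); (9,7); (9,8); (9,9)].

Definition tb (x y z : bool) := x && (y || z).

Fixpoint map3 (a b c : seq bool) : seq bool :=
  match a, b, c with
  | x :: a', y :: b', z :: c' => tb x y z :: map3 a' b' c'
  | _, _, _ => [::]
  end.

Lemma map3_map (T : Type) (g1 g2 g3 : T -> bool) s :
  map3 (map g1 s) (map g2 s) (map g3 s) = map (fun p => tb (g1 p) (g2 p) (g3 p)) s.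
Proof. by elim: s => //= p s ->. Qed.

Lemma closed3 a b c : a \in S3 -> b \in S3 -> c \in S3 -> map3 a b c \in S3.
Proof.
have H : all (fun a => all (fun b => all (fun c => map3 a b c \in S3) S3) S3) S3
  by vm_compute.
by move=> /(allP H) /allP Ha /Ha /allP Hb /Hb.
Qed.

Lemma closed4 a b c : a \in S4 -> b \in S4 -> c \in S4 -> map3 a b c \in S4.
Proof.
have H : all (fun a => all (fun b => all (fun c => map3 a b c \in S4) S4) S4) S4
  by vm_compute.
by move=> /(allP H) /allP Ha /Ha /allP Hb /Hb.
Qed.

Definition pts3 : seq (bool * bool * bool) :=
  [:: (false,false,false); (false,false,true); (false,true,false); (false,true,true);
      (true,false,false); (true,false,true); (true,true,false); (true,true,true)].

Definition tab3 (s : term var3) : seq bool :=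
  [seq ev3 tb s p.1.1 p.1.2 p.2 | p <- pts3].

Lemma tab3_in s : tab3 s \in S3.
Proof.
elim: s => [v|a IHa b IHb c IHc]; first by case: v.
have -> : tab3 (tapp a b c) = map3 (tab3 a) (tab3 b) (tab3 c) by rewrite /tab3 map3_map.
exact: closed3.
Qed.

Definition ap3 (s : seq bool) (x y z : bool) := nth false s (4 * x + 2 * y + z).

Lemma ap3E s x y z : ap3 (tab3 s) x y z = ev3 tb s x y z.
Proof. by case: x; case: y; case: z. Qed.

Definition bs := [:: false; true].
Definition cxyx a := all (fun x => all (fun y => ap3 a x y x == x) bs) bs.
Definition rxzz a b := all (fun x => all (fun z => ap3 a x z z == ap3 b x z z) bs) bs.
Definition rxxz a b := all (fun x => all (fun z => ap3 a x x z == ap3 b x x z) bs) bs.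
Definition r3 (h : nat) := if odd h then rxxz else rxzz.
Definition L3 := filter cxyx S3.
Fixpoint lev3 (n : nat) : seq (seq bool) :=
  match n with
  | 0 => [:: tab3 (tvar X3)]
  | n.+1 => filter (fun g => has (fun f => r3 n f g) (lev3 n)) L3
  end.

Lemma lev3_4 : tab3 (tvar Z3) \notin lev3 4.
Proof. by vm_compute. Qed.

Lemma inBd_bool : in_Bd tb.
Proof.
exists unit, _, (fun _ : unit => (bool : distrLatticeType _)), (fun _ => True),
  (fun x => x tt).
split; first by [].
split; first by move=> a; exists (fun _ => a).
by [].
Qed.

Lemma not_alvin4 : ~ alvin 4 in_Bd.
Proof.
move=> [t Ht]; have H := Ht bool tb inBd_bool.
have E0 : tab3 (t 0) = tab3 (tvar X3).
  by apply: eq_map => -[[x y] z]; case: (H x y z).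
have E4 : tab3 (t 4) = tab3 (tvar Z3).
  by apply: eq_map => -[[x y] z]; case: (H x y z) => _ [].
have L : forall h, h <= 4 -> tab3 (t h) \in lev3 h.
  elim=> [|h IH] Hh; first by rewrite E0 mem_seq1.
  have -> : lev3 h.+1 = filter (fun g => has (fun f => r3 h f g) (lev3 h)) L3 by [].
  rewrite mem_filter; apply/andP; split; last first.
    rewrite /L3 mem_filter tab3_in andbT.
    apply/allP => x _; apply/allP => y _; rewrite ap3E; apply/eqP.
    by case: (H x y x) => _ [_ [E _]]; apply: E.
  apply/hasP; exists (tab3 (t h)); first exact: IH (ltnW Hh).
  rewrite /r3; case Ho: (odd h).
    apply/allP => x _; apply/allP => z _; rewrite !ap3E; apply/eqP.
    by case: (H x x z) => _ [_ [_ [_ E]]]; apply: E.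
  apply/allP => x _; apply/allP => z _; rewrite !ap3E; apply/eqP.
  by case: (H x z z) => _ [_ [_ [E _]]]; apply: E => //; rewrite Ho.
by have := L 4 (leqnn 4); rewrite E4 (negbTE lev3_4).
Qed.

Definition pts4 : seq (bool * bool * bool * bool) :=
  [seq (p.1.1.1, p.1.1.2, p.1.2, p.2) |
     p <- [:: (false,false,false,false); (false,false,false,true);
              (false,false,true,false); (false,false,true,true);
              (false,true,false,false); (false,true,false,true);
              (false,true,true,false); (false,true,true,true);
              (true,false,false,false); (true,false,false,true);
              (true,false,true,false); (true,false,true,true);
              (true,true,false,false); (true,true,false,true);
              (true,true,true,false); (true,true,true,true)]].

Definition tab4 (s : term var4) : seq bool :=
  [seq ev4 tb s p.1.1.1 p.1.1.2 p.1.2 p.2 | p <- pts4].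

Lemma tab4_in s : tab4 s \in S4.
Proof.
elim: s => [v|a IHa b IHb c IHc]; first by case: v.
have -> : tab4 (tapp a b c) = map3 (tab4 a) (tab4 b) (tab4 c) by rewrite /tab4 map3_map.
exact: closed4.
Qed.

Definition ap4 (s : seq bool) (x y z w : bool) := nth false s (8 * x + 4 * y + 2 * z + w).

Lemma ap4E s x y z w : ap4 (tab4 s) x y z w = ev4 tb s x y z w.
Proof. by case: x; case: y; case: z; case: w. Qed.

Definition cxyyx a := all (fun x => all (fun y => ap4 a x y y x == x) bs) bs.
Definition rxxww a b := all (fun x => all (fun w => ap4 a x x w w == ap4 b x x w w) bs) bs.
Definition rxyyw a b :=
  all (fun x => all (fun y => all (fun w => ap4 a x y y w == ap4 b x y y w) bs) bs) bs.
Definition r4 (h : nat) := if odd h then rxxww else rxyyw.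
Definition L4 := filter cxyyx S4.
Fixpoint lev4 (n : nat) : seq (seq bool) :=
  match n with
  | 0 => [:: tab4 (tvar X4)]
  | n.+1 => filter (fun g => has (fun f => r4 n f g) (lev4 n)) L4
  end.

Lemma lev4_5 : tab4 (tvar W4) \notin lev4 5.
Proof. by vm_compute. Qed.

Lemma not_rm5 : ~ reversed_modular 5 in_Bd.
Proof.
move=> [u Hu]; have H := Hu bool tb inBd_bool.
have E0 : tab4 (u 0) = tab4 (tvar X4).
  by apply: eq_map => -[[[x y] z] w]; case: (H x y z w) => _ [].
have E5 : tab4 (u 5) = tab4 (tvar W4).
  by apply: eq_map => -[[[x y] z] w]; case: (H x y z w) => _ [_ []].
have L : forall h, h <= 5 -> tab4 (u h) \in lev4 h.
  elim=> [|h IH] Hh; first by rewrite E0 mem_seq1.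
  have -> : lev4 h.+1 = filter (fun g => has (fun f => r4 h f g) (lev4 h)) L4 by [].
  rewrite mem_filter; apply/andP; split; last first.
    rewrite /L4 mem_filter tab4_in andbT.
    apply/allP => x _; apply/allP => y _; rewrite ap4E; apply/eqP.
    by case: (H x y x x) => E _; apply: E.
  apply/hasP; exists (tab4 (u h)); first exact: IH (ltnW Hh).
  rewrite /r4; case Ho: (odd h).
    apply/allP => x _; apply/allP => w _; rewrite !ap4E; apply/eqP.
    by case: (H x x w w) => _ [_ [_ [E _]]]; apply: E.
  apply/allP => x _; apply/allP => y _; apply/allP => w _; rewrite !ap4E; apply/eqP.
  by case: (H x y y w) => _ [_ [_ [_ E]]]; apply: E => //; rewrite Ho.
by have := L 5 (leqnn 5); rewrite E5 (negbTE lev4_5).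
Qed.

Lemma Bd_B (A : Type) (f : A -> A -> A -> A) : in_Bd f -> in_B f.
Proof. move=> [I [d [L [P [h H]]]]]; by exists I, d, L, P, h. Qed.

(* ---------- the free algebra F(3) as a finite algebra ---------- *)
Definition AA := 'I_10.
Definition fN (n m k : nat) : nat :=
  index (map3 (nth [::] S3 n) (nth [::] S3 m) (nth [::] S3 k)) S3.
Definition fA (a b c : AA) : AA := inord (fN a b c).

Lemma sizeS3 : size S3 = 10. Proof. by []. Qed.

Lemma fN_lt (n m k : nat) : n < 10 -> m < 10 -> k < 10 -> fN n m k < 10.
Proof.
move=> Hn Hm Hk; rewrite /fN -sizeS3 index_mem.
by apply: closed3; apply: mem_nth; rewrite sizeS3.
Qed.

Lemma val_fA (a b c : AA) : val (fA a b c) = fN a b c.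
Proof. by apply: inordK; apply: fN_lt. Qed.

Definition tab8 (x : nat -> bool) : seq bool := [seq x i | i <- iota 0 8].

Lemma nth_tab8 (s : seq bool) : size s = 8 -> tab8 (fun i => nth false s i) = s.
Proof. by do 8!(case: s => [|? s] //); case: s. Qed.

Lemma uniqS3 : uniq S3. Proof. by vm_compute. Qed.
Lemma sizes3 : all (fun s => size s == 8) S3. Proof. by vm_compute. Qed.

Lemma encK (s : seq bool) : s \in S3 -> nth [::] S3 (index s S3) = s.
Proof. exact: nth_index. Qed.

Lemma inBd_A : in_Bd fA.
Proof.
exists nat, _, (fun _ : nat => (bool : distrLatticeType _)),
  (fun x => tab8 x \in S3), (fun x => (inord (index (tab8 x) S3) : AA)).
have Etab : forall x y z : nat -> bool,
    tab8 (fun i => Order.meet (x i) (Order.join (y i) (z i)))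
    = map3 (tab8 x) (tab8 y) (tab8 z).
  by move=> x y z; rewrite /tab8 map3_map.
split.
  by move=> x y z Hx Hy Hz; rewrite Etab closed3.
split.
  move=> a; exists (fun i => nth false (nth [::] S3 a) i).
  have Ha : nth [::] S3 a \in S3 by apply: mem_nth; rewrite sizeS3.
  rewrite nth_tab8; last by apply/eqP; exact: (allP sizes3).
  split=> //.
  have Hi : index (nth [::] S3 a) S3 = a by rewrite index_uniq ?uniqS3 ?sizeS3.
  rewrite Hi; apply: val_inj; apply: inordK; exact: ltn_ord.
move=> x y z Hx Hy Hz; rewrite Etab.
have key : forall s, s \in S3 -> nth [::] S3 (inord (index s S3) : AA) = s.
  move=> s Hs; rewrite inordK; first exact: nth_index.
  by rewrite -sizeS3 index_mem.
by rewrite /fA /fN !key.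
Qed.

Definition relP (P : seq (nat * nat)) (a b : AA) : Prop := (val a, val b) \in P.

Lemma congP (P : seq (nat * nat)) :
  all (fun n => (n, n) \in P) (iota 0 10) ->
  all (fun p => (p.2, p.1) \in P) P ->
  all (fun p => all (fun q => (p.2 == q.1) ==> ((p.1, q.2) \in P)) P) P ->
  all (fun p1 => all (fun p2 => all (fun p3 =>
     (fN p1.1 p2.1 p3.1, fN p1.2 p2.2 p3.2) \in P) P) P) P ->
  congruence fA (relP P).
Proof.
move=> Hr Hs Ht Hc; split.
  by move=> a; apply: (allP Hr); rewrite mem_iota /= add0n ltn_ord.
split.
  by move=> a b /(allP Hs).
split.
  move=> a b c /(allP Ht) /allP H1 /H1 /=; by rewrite eqxx.
move=> a1 b1 a2 b2 a3 b3 /(allP Hc) /allP H1 /H1 /allP H2 /H2 /=.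
by rewrite /relP !val_fA.
Qed.

Lemma cong_al : congruence fA (relP alP).
Proof. by apply: congP; vm_compute. Qed.
Lemma cong_be : congruence fA (relP beP).
Proof. by apply: congP; vm_compute. Qed.
Lemma cong_ga : congruence fA (relP gaP).
Proof. by apply: congP; vm_compute. Qed.

Definition e4 : AA := @Ordinal 10 4 isT.
Definition e8 : AA := @Ordinal 10 8 isT.
Definition e9 : AA := @Ordinal 10 9 isT.

Lemma inI (a : AA) : nat_of_ord a \in iota 0 10.
Proof. by rewrite mem_iota /= add0n ltn_ord. Qed.

Lemma not_CI1 : ~ CI1 in_Bd.
Proof.
move=> H; have := H AA fA inBd_A _ _ _ cong_al cong_be cong_ga e4 e9.
case.
  by split; [|exists e8; split]; vm_compute.
move=> m [[Ha [c [Hg Hb]]] [Ha' [c' [Hg' Hb']]]].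
have chk : all (fun m => all (fun c => all (fun c' => ~~ [&& (4, m) \in alP,
   (4, c) \in gaP, (c, m) \in beP, (m, 9) \in alP, (m, c') \in gaP & (c', 9) \in beP])
   (iota 0 10)) (iota 0 10)) (iota 0 10) by vm_compute.
move: chk => /allP /(_ _ (inI m)) /allP /(_ _ (inI c)) /allP /(_ _ (inI c')).
by rewrite Ha Hg Hb Ha' Hg' Hb'.
Qed.

Lemma not_CI2 : ~ CI2 in_Bd.
Proof.
move=> H; have := H AA fA inBd_A _ _ _ cong_al cong_be cong_ga e4 e9.
case.
  by split; [|exists e8; split]; vm_compute.
move=> c1 [Hg1 [c2 [[Ha2 Hb2] [c3 [[Ha3 Hg3] Hb3]]]]].
have chk : all (fun c1 => all (fun c2 => all (fun c3 => ~~ [&& (4, c1) \in gaP,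
   (c1, c2) \in alP, (c1, c2) \in beP, (c2, c3) \in alP, (c2, c3) \in gaP & (c3, 9) \in beP])
   (iota 0 10)) (iota 0 10)) (iota 0 10) by vm_compute.
move: chk => /allP /(_ _ (inI c1)) /allP /(_ _ (inI c2)) /allP /(_ _ (inI c3)).
by rewrite Hg1 Ha2 Hb2 Ha3 Hg3 Hb3.
Qed.

Theorem proposition3p6 :
  ~ reversed_modular 5 in_B /\ ~ reversed_modular 5 in_Bd /\
  ~ CI1 in_B /\ ~ CI1 in_Bd /\
  ~ CI2 in_B /\ ~ CI2 in_Bd /\
  ~ alvin 4 in_B /\ ~ alvin 4 in_Bd.
Proof.
split.
  move=> [u Hu]; apply: not_rm5; exists u => A f /Bd_B; exact: Hu.
split; first exact: not_rm5.
split.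
  move=> H; apply: not_CI1 => A f /Bd_B; exact: H.
split; first exact: not_CI1.
split.
  move=> H; apply: not_CI2 => A f /Bd_B; exact: H.
split; first exact: not_CI2.
split; last exact: not_alvin4.
move=> [t Ht]; apply: not_alvin4; exists t => A f /Bd_B; exact: Ht.
Qed.
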